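(* The class of directed Linear aTAM systems is not intrinsically universal: there is no finite 1D tile set $U$ (and temperature $\tau'$) with computable $\mathcal{R},S$ such that every directed Linear aTAM system $\mathcal{T}$ is simulated, at some scale $m$ under $\mathcal{R}(\mathcal{T})$, by the Linear aTAM system $(U,S(\mathcal{T}),\tau')$.
   Context: 1D aTAM: a tile type has a west glue and an east glue, each a pair (finite string label, nonnegative integer strength); a tile set is finite. Assemblies are partial functions $\alpha:\mathbb{Z}\dashrightarrow T$ with nonempty interval domain; adjacent tiles interact if the east glue of the left equals the west glue of the right with positive strength; $\alpha$ is $\tau$-stable if every cut between consecutive tiles has strength $\ge\tau$. A system $\mathcal{T}=(T,\sigma,\tau)$ has finite $\tau$-stable seed $\sigma$; growth is by single $\tau$-stable tile additions (finite or infinite sequences, result = limit). The Linear aTAM additionally requires that a tile can be added at empty location $p$ only if there is a path in $\mathbb{Z}$ from $p$ to a point outside the minimal bounding interval of the current assembly avoiding its domain. $\mathcal{A}[\mathcal{T}]$ are producible assemblies, $\mathcal{A}_\Box[\mathcal{T}]$ the producible ones admitting no further tile; $\mathcal{T}$ is directed if $|\mathcal{A}_\Box[\mathcal{T}]|=1$. Simulation: an $m$-block over $S$ is a partial function $\{0,\dots,m-1\}\dashrightarrow S$; $\alpha^m_x$ is $i\mapsto\alpha(mx+i)$. A partial $R$ from $m$-blocks to $T$ is valid if $\alpha\sqsubseteq\beta$, $\alpha\in\mathrm{dom}R$ imply $R(\beta)=R(\alpha)$; $R^*(\alpha')$ is $x\mapsto R(\alpha'^m_x)$. $\alpha'$ maps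 cleanly if each nonempty block at $x$ has $x$ or $x\pm1$ in $\mathrm{dom}\,R^*(\alpha')$ (or at most one nonempty block). $\mathcal{S}$ simulates $\mathcal{T}$ under $R$ if: (i) $R^*$ maps $\mathcal{A}[\mathcal{S}]$ onto $\mathcal{A}[\mathcal{T}]$ and $\mathcal{A}_\Box[\mathcal{S}]$ onto $\mathcal{A}_\Box[\mathcal{T}]$, all producible assemblies mapping cleanly; (ii) producible $\alpha'\to^\mathcal{S}\beta'$ implies $R^*(\alpha')\to^\mathcal{T}R^*(\beta')$; (iii) for every $\alpha\in\mathcal{A}[\mathcal{T}]$ there is $\Pi\subset\mathcal{A}[\mathcal{S}]$ with $R^*=\alpha$ on $\Pi$ such that for every producible $\beta$ with $\alpha\to^\mathcal{T}\beta$: each $\alpha'\in\Pi$ produces some $\beta'$ with $R^*(\beta')=\beta$, and whenever producible $\alpha''\to^\mathcal{S}\beta'$ with $R^*(\alpha'')=\alpha$, $R^*(\beta')=\beta$, some $\alpha'\in\Pi$ produces $\alpha''$. *)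

(* Defs.v *)
From HB Require Import structures.
From mathcomp Require Import all_boot all_order all_algebra.
Set Implicit Arguments. Unset Strict Implicit. Unset Printing Implicit Defensive.
Import Order.TTheory GRing.Theory Num.Theory.
Local Open Scope ring_scope.

Inductive rf : Type :=
| RZero | RSucc | RProj (i : nat) | RComp (f : rf) (gs : list rf)
| RPrec (f g : rf) | RMu (f : rf).

Inductive rf_eval : rf -> seq nat -> nat -> Prop :=
| ev_zero v : rf_eval RZero v 0
| ev_succ x v : rf_eval RSucc (x :: v) x.+1
| ev_proj i v : (i < size v)%N -> rf_eval (RProj i) v (nth 0%N v i)
| ev_comp f gs v ws y : rf_evals gs v ws -> rf_eval f ws y -> rf_eval (RComp f gs) v y
| ev_prec0 f g v y : rf_eval f v y -> rf_eval (RPrec f g) (0%N :: v) y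
| ev_precS f g n v r y : rf_eval (RPrec f g) (n :: v) r -> rf_eval g (n :: r :: v) y ->
    rf_eval (RPrec f g) (n.+1 :: v) y
| ev_mu f v n : rf_eval f (n :: v) 0 ->
    (forall k, (k < n)%N -> exists r, rf_eval f (k :: v) r.+1) -> rf_eval (RMu f) v n
with rf_evals : seq rf -> seq nat -> seq nat -> Prop :=
| evs_nil v : rf_evals [::] v [::]
| evs_cons g gs v y ys : rf_eval g v y -> rf_evals gs v ys -> rf_evals (g :: gs) v (y :: ys).

Definition computable_map (A B : countType) (f : A -> B) : Prop :=
  exists p : rf, forall x : A, rf_eval p [:: pickle x] (pickle (f x)).

(* A glue: (label, strength); labels are finite strings over nat. *)
Definition glue := (seq nat * nat)%type.
Definition tile := (glue * glue)%type.
Definition west (t : tile) : glue := t.1.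
Definition east (t : tile) : glue := t.2.

Definition asm := int -> option tile.

Definition indom (a : asm) (z : int) : bool := a z != None.

Definition is_assembly (Ts : seq tile) (a : asm) : Prop :=
  (exists z, indom a z) /\
  (forall x y z : int, x <= y -> y <= z -> indom a x -> indom a z -> indom a y) /\
  (forall z t, a z = Some t -> t \in Ts).

Definition bond (t1 t2 : tile) : nat :=
  if east t1 == west t2 then (east t1).2 else 0%N.

Definition stable (tau : nat) (a : asm) : Prop :=
  forall z t1 t2, a z = Some t1 -> a (z + 1) = Some t2 -> (tau <= bond t1 t2)%N.

Definition seedT := (int * seq tile)%type.
Definition seed_asm (s : seedT) : asm :=
  fun z => if s.1 <= z then nth None (map Some s.2) `|z - s.1|%N else None.

Definition system := (seq tile * seedT * nat)%type.
Definition tiles_of (T : system) : seq tile := T.1.1.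
Definition seed_of (T : system) : seedT := T.1.2.
Definition temp_of (T : system) : nat := T.2.

Definition valid_system (T : system) : Prop :=
  (0 < temp_of T)%N /\ (seed_of T).2 != [::] /\
  all (fun t => t \in tiles_of T) (seed_of T).2 /\
  stable (temp_of T) (seed_asm (seed_of T)).

Definition outside_bbox (a : asm) (q : int) : Prop :=
  (forall z, indom a z -> q < z) \/ (forall z, indom a z -> z < q).

(* Linear aTAM condition: a path in Z from p to outside the bounding
   interval of a, avoiding dom a. *)
Definition linear_ok (a : asm) (p : int) : Prop :=
  exists q, outside_bbox a q /\
    (forall z, Num.min p q <= z -> z <= Num.max p q -> ~~ indom a z).

Definition step (T : system) (a b : asm) : Prop :=
  exists p t, a p = None /\ t \in tiles_of T /\
    (forall z, b z = if z == p then Some t else a z) /\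
    is_assembly (tiles_of T) b /\ stable (temp_of T) b /\ linear_ok a p.

(* a ->^T b : finite or infinite assembly sequence, result = limit
   (stuttering steps allowed, so finite sequences are covered). *)
Definition produces (T : system) (a b : asm) : Prop :=
  exists s : nat -> asm, s 0%N =1 a /\
    (forall i, step T (s i) (s i.+1) \/ s i.+1 =1 s i) /\
    (forall z, exists N, forall n, (N <= n)%N -> s n z = b z).

Definition producible (T : system) (a : asm) : Prop :=
  produces T (seed_asm (seed_of T)) a.

Definition terminal (T : system) (a : asm) : Prop :=
  producible T a /\ ~ exists b, step T a b.

Definition directed (T : system) : Prop :=
  exists a, terminal T a /\ forall b, terminal T b -> b =1 a.

Definition block := seq (option tile).
Definition blk (m : nat) (a : asm) (x : int) : block :=
  [seq a (m%:Z * x + i%:Z) | i <- iota 0 m].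

(* A representation function: scale m and a finite table giving the partial
   map from m-blocks to tiles (first matching entry). *)
Definition rep_fun := (nat * seq (block * tile))%type.

Definition Rlook (tbl : seq (block * tile)) (b : block) : option tile :=
  match [seq e <- tbl | e.1 == b] with e :: _ => Some e.2 | [::] => None end.

Definition Rstar (R : rep_fun) (a : asm) : asm := fun x => Rlook R.2 (blk R.1 a x).

Definition block_over (U : seq tile) (m : nat) (b : block) : Prop :=
  size b = m /\ forall i t, nth None b i = Some t -> t \in U.

Definition subblock (b1 b2 : block) : Prop :=
  size b1 = size b2 /\ forall i t, nth None b1 i = Some t -> nth None b2 i = Some t.

Definition valid_repr (U : seq tile) (R : rep_fun) : Prop :=
  forall b1 b2, block_over U R.1 b1 -> block_over U R.1 b2 ->
    subblock b1 b2 -> Rlook R.2 b1 <> None -> Rlook R.2 b2 = Rlook R.2 b1.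

Definition nonempty_block (m : nat) (a : asm) (x : int) : Prop :=
  exists i, (i < m)%N /\ indom a (m%:Z * x + i%:Z).

Definition maps_cleanly (R : rep_fun) (a : asm) : Prop :=
  (forall x, nonempty_block R.1 a x ->
     exists u : int, -1 <= u /\ u <= 1 /\ indom (Rstar R a) (x + u)) \/
  (forall x y, nonempty_block R.1 a x -> nonempty_block R.1 a y -> x = y).

Definition simulates (S T : system) (R : rep_fun) : Prop :=
  (0 < R.1)%N /\ valid_repr (tiles_of S) R /\
  (forall e, e \in R.2 -> e.2 \in tiles_of T) /\
  (forall a', producible S a' -> producible T (Rstar R a')) /\
  (forall a, producible T a -> exists a', producible S a' /\ Rstar R a' =1 a) /\
  (forall a', terminal S a' -> terminal T (Rstar R a')) /\
  (forall a, terminal T a -> exists a', terminal S a' /\ Rstar R a' =1 a) /\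
  (forall a', producible S a' -> maps_cleanly R a') /\
  (forall a' b', producible S a' -> producible S b' -> produces S a' b' ->
     produces T (Rstar R a') (Rstar R b')) /\
  (forall a, producible T a ->
    exists Pi : asm -> Prop,
      (forall a', Pi a' -> producible S a' /\ Rstar R a' =1 a) /\
      (forall b, producible T b -> produces T a b ->
        (forall a', Pi a' -> exists b', produces S a' b' /\ Rstar R b' =1 b) /\
        (forall a'' b', producible S a'' -> produces S a'' b' ->
           Rstar R a'' =1 a -> Rstar R b' =1 b ->
           exists a', Pi a' /\ produces S a' a''))).

(* Main.v *)
Require Import Defs.
From mathcomp Require Import all_boot all_order all_algebra.
From mathcomp Require Import zify.
Set Implicit Arguments. Unset Strict Implicit. Unset Printing Implicit Defensive.
Import Order.TTheory GRing.Theory Num.Theory.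
Local Open Scope ring_scope.


Definition intv (e : asm) : Prop :=
  forall x y z : int, x <= y -> y <= z -> indom e x -> indom e z -> indom e y.



Lemma nthS (l : seq tile) k :
  nth None (map Some l) k = if (k < size l)%N then Some (nth (([::],0%N),([::],0%N)) l k) else None.
Proof.
case: ifP => h; first by rewrite (nth_map (([::],0%N),([::],0%N))).
by rewrite nth_default // size_map leqNgt h.
Qed.

Lemma seed_asm_dom (s : seedT) z :
  indom (seed_asm s) z = (s.1 <= z) && (z < s.1 + (size s.2)%:Z).
Proof.
rewrite /indom /seed_asm; case: ifP => h /=; last by [].
rewrite nthS; case: ifP => h2 /=; lia.
Qed.

Lemma seq_inv Sy (P : asm -> Prop) (s : nat -> asm) :
  (forall a b, a =1 b -> P a -> P b) -> P (s 0%N) ->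
  (forall a b, P a -> step Sy a b -> P b) ->
  (forall i, step Sy (s i) (s i.+1) \/ s i.+1 =1 s i) -> forall n, P (s n).
Proof.
move=> Pext P0 Pstep hs; elim=> // n IH.
case: (hs n) => [st|eq]; first exact: Pstep st.
by apply: Pext IH => z; rewrite eq.
Qed.

Lemma conv3 (s : nat -> asm) b :
  (forall z, exists N, forall n, (N <= n)%N -> s n z = b z) ->
  forall x y z, exists n, [/\ s n x = b x, s n y = b y & s n z = b z].
Proof.
move=> h x y z; case: (h x) => N1 h1; case: (h y) => N2 h2; case: (h z) => N3 h3.
exists (maxn N1 (maxn N2 N3)); split; [apply: h1|apply: h2|apply: h3]; lia.
Qed.

Definition PS (Sy : system) (e : asm) : Prop :=
  [/\ (forall z t, seed_asm (seed_of Sy) z = Some t -> e z = Some t),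
      intv e, (forall z t, e z = Some t -> t \in tiles_of Sy) &
      stable (temp_of Sy) e].

Lemma PS_ext Sy a b : a =1 b -> PS Sy a -> PS Sy b.
Proof.
move=> e [h1 h2 h3 h4]; split.
- by move=> z t /h1; rewrite e.
- by move=> x y z; rewrite /indom -!e; apply: h2.
- by move=> z t; rewrite -e; apply: h3.
- by move=> z t1 t2; rewrite -!e; apply: h4.
Qed.

Lemma PS_seed Sy : valid_system Sy -> PS Sy (seed_asm (seed_of Sy)).
Proof.
case=> _ [_ [hall hst]]; split => //.
- by move=> x y z; rewrite !seed_asm_dom => *; lia.
- move=> z t; rewrite /seed_asm; case: ifP => // _; rewrite nthS; case: ifP => // h [<-].
  by move/allP: hall; apply; apply: mem_nth.
Qed.

Lemma PS_step Sy a b : PS Sy a -> step Sy a b -> PS Sy b.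
Proof.
move=> [h1 h2 h3 h4] [p [t [hp [ht [hb [[_ [hI hT]] hS]]]]]]; split => //.
move=> z t' /h1 hz; rewrite hb; case: eqP => [ez|//]; by rewrite ez hp in hz.
by case: hS.
Qed.

Lemma prod_inv Sy b : valid_system Sy -> producible Sy b -> PS Sy b.
Proof.
move=> vS [s [s0 [hs hc]]].
have hn := seq_inv (@PS_ext Sy) (PS_ext (fun z => esym (s0 z)) (PS_seed vS)) (@PS_step Sy) hs.
split.
- move=> z t hz; case: (conv3 hc z z z) => n [e _ _]; rewrite -e.
  by case: (hn n) => h1 _ _ _; apply: h1.
- move=> x y z hxy hyz hx hz; case: (conv3 hc x y z) => n [ex ey ez].
  case: (hn n) => _ h2 _ _; rewrite /indom -ey; apply: (h2 x y z) => //; by rewrite /indom ?ex ?ez.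
- move=> z t hz; case: (conv3 hc z z z) => n [e _ _]; case: (hn n) => _ _ h3 _.
  by apply: (h3 z); rewrite e.
- move=> z t1 t2 hz1 hz2; case: (conv3 hc z (z+1) z) => n [e1 e2 _]; case: (hn n) => _ _ _ h4.
  by apply: (h4 z); rewrite ?e1 ?e2.
Qed.


Ltac ifs := repeat (let h := fresh "h" in case: ifP => h); try done; try (exfalso; lia); try lia.

Definition tk (N k : nat) : tile :=
  ((if k == 0%N then ([::], 0%N) else ([:: k], 1%N)),
   (if k == N then ([::], 0%N) else ([:: k.+1], 1%N))).
Definition TN (N : nat) : system := (map (tk N) (iota 0 N.+1), (0, [:: tk N 0]), 1%N).
Definition fullN (N : nat) : asm :=
  fun z => if (0 <= z) && (z <= N%:Z) then Some (tk N `|z|%N) else None.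

Lemma bond_chain N j : (j < N)%N -> bond (tk N j) (tk N j.+1) = 1%N.
Proof.
move=> h; rewrite /bond /east /west /tk /=.
have -> : (j == N) = false by apply/eqP; lia.
by rewrite eqxx.
Qed.

Lemma seedTN N z : seed_asm (seed_of (TN N)) z = if z == 0 then Some (tk N 0) else None.
Proof.
rewrite /seed_asm /=; case: ifP => h; case: ifP => h3 //=; try lia.
- by rewrite (eqP h3).
- have : `|z - 0|%N != 0%N by apply/eqP; lia.
  by case: `|z - 0|%N => // -[|n].
Qed.

Lemma valid_TN N : valid_system (TN N).
Proof.
split => //; split => //; split.
  by rewrite /= andbT; apply/mapP; exists 0%N => //; rewrite mem_iota.
move=> z t1 t2; rewrite !seedTN; case: ifP => // /eqP ->; rewrite add0r //.
Qed.

Definition InvT (N : nat) (e : asm) : Prop :=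
  [/\ (forall z t, e z = Some t -> [/\ 0 <= z, z <= N%:Z & t = tk N `|z|%N]),
      e 0 = Some (tk N 0) & intv e].

Lemma InvT_ext N a b : a =1 b -> InvT N a -> InvT N b.
Proof.
move=> e [h1 h2 h3]; split.
- by move=> z t; rewrite -e; apply: h1.
- by rewrite -e.
- by move=> x y z; rewrite /indom -!e; apply: h3.
Qed.

Lemma InvT_step N a b : InvT N a -> step (TN N) a b -> InvT N b.
Proof.
move=> [h1 h2 h3] [p [t [hp [ht [hb [[_ [hI hT]] [hS _]]]]]]].
have p0 : p != 0 by apply/eqP => e; rewrite e h2 in hp.
have hpt : [/\ 0 <= p, p <= N%:Z & t = tk N `|p|%N].
  move: ht => /mapP [i]; rewrite mem_iota add0n => hi et.
  have bp : b p = Some t by rewrite hb eqxx.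
  have p0' : (0 == p) = false by apply/negbTE; rewrite eq_sym.
  have b0 : indom b 0 by rewrite /indom hb p0' h2.
  case: (ltrP 0 p) => hp0.
  - have : indom b (p - 1) by apply: (hI 0 (p-1) p) => //; [lia|lia|rewrite /indom bp].
    rewrite /indom hb; have -> : (p - 1 == p) = false by apply/eqP; lia.
    case ea: (a (p-1)) => [t'|//] _.
    case: (h1 _ _ ea) => _ hle et'.
    have := hS (p-1) t' t; rewrite hb (_ : (p-1 == p) = false); last by apply/eqP; lia.
    rewrite ea (_ : p - 1 + 1 = p); last lia.
    move=> /(_ erefl bp); rewrite et' et /bond /east /west /tk /=.
    case: (`|(p - 1)%R|%N =P N) => [hj|hj]; first by case: ifP.
    case: (i =P 0%N) => [hi0|hi0] /=; first by [].
    case: ifP => // /eqP [e1] _.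
    split => //; [lia| lia | ].
    have ei : i = `|p|%N by lia.
    by rewrite ei (_ : (`|p|%N == 0%N) = false) //; apply/eqP; lia.
  - have : indom b (p + 1) by apply: (hI p (p+1) 0) => //; [lia|lia|rewrite /indom bp].
    rewrite /indom hb; have -> : (p + 1 == p) = false by apply/eqP; lia.
    case ea: (a (p+1)) => [t'|//] _.
    case: (h1 _ _ ea) => hge _ et'.
    have ep : p + 1 = 0 by lia.
    have := hS p t t'; rewrite hb eqxx hb (_ : (p + 1 == p) = false); last by apply/eqP; lia.
    move=> /(_ erefl ea); rewrite et' ep /bond /east /west /tk /=.
    by case: eqP => [->|].
split.
- move=> z t'; rewrite hb; case: eqP => [-> [<-] //|_]; exact: h1.
- by rewrite hb (_ : (0 == p) = false) //; apply/negbTE; rewrite eq_sym.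
- exact: hI.
Qed.

Lemma InvT_seed N : InvT N (seed_asm (seed_of (TN N))).
Proof.
split.
- by move=> z t; rewrite seedTN; case: ifP => // /eqP -> [<-].
- by rewrite seedTN.
- by move=> x y z; rewrite /indom !seedTN; do 3 case: ifP => //; lia.
Qed.

Lemma prodT_inv N b : producible (TN N) b -> InvT N b.
Proof.
move=> [s [s0 [hs hc]]].
have hn := seq_inv (@InvT_ext N) (InvT_ext (fun z => esym (s0 z)) (InvT_seed N)) (@InvT_step N) hs.
split.
- move=> z t hz; case: (conv3 hc z z z) => n [e _ _]; case: (hn n) => h1 _ _.
  by apply: h1; rewrite e.
- case: (conv3 hc 0 0 0) => n [e _ _]; rewrite -e; by case: (hn n).
- move=> x y z hxy hyz hx hz; case: (conv3 hc x y z) => n [ex ey ez].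
  case: (hn n) => _ _ h2; rewrite /indom -ey; apply: (h2 x y z) => //; by rewrite /indom ?ex ?ez.
Qed.

Lemma lin_ok_right a p : (forall z, indom a z -> z < p) -> ~~ indom a p -> linear_ok a p.
Proof.
move=> h hp; exists p; split; first by right.
by move=> z; rewrite Order.POrderTheory.minxx Order.POrderTheory.maxxx => h1 h2; have -> : z = p by lia.
Qed.

Lemma tk_in N k : (k <= N)%N -> tk N k \in tiles_of (TN N).
Proof. by move=> h; apply/mapP; exists k => //; rewrite mem_iota; lia. Qed.

Definition uN N (i : nat) : asm :=
  fun z => if (0 <= z) && (z <= (minn i N)%:Z) then Some (tk N `|z|%N) else None.

Lemma full_prod N : producible (TN N) (fullN N).
Proof.
exists (uN N); split; [|split].
- move=> z; rewrite seedTN /uN; case: (z =P 0) => [->|/eqP hz].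
    by [].
  case: ifP => // h; exfalso; lia.
- move=> i; case: (leqP N i) => hi.
    right => z; rewrite /uN (_ : minn i.+1 N = N); last lia.
    by rewrite (_ : minn i N = N); last lia.
  left; exists (i.+1)%:Z, (tk N i.+1); split; [|split; [|split; [|split; [|split]]]].
  + rewrite /uN; case: ifP => //; lia.
  + by apply: tk_in.
  + move=> z; rewrite /uN; case: eqP => [->|hz].
      by case: ifP => [_|]; [|lia].
    case: ifP => h1; case: ifP => h2 //; lia.
  + split; first by exists 0; rewrite /indom /uN; ifs.
    split; first by move=> x y z; rewrite /indom /uN; ifs.
    move=> z t; rewrite /uN; case: ifP => // h [<-]; apply: tk_in; lia.
  + move=> z t1 t2; rewrite /uN; case: ifP => // h1 [<-]; case: ifP => // h2 [<-].
    rewrite (_ : absz (z + 1) = (absz z).+1); last lia.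
    by rewrite bond_chain //; lia.
  + apply: lin_ok_right.
      by move=> z; rewrite /indom /uN; case: ifP => //; lia.
    by rewrite /indom /uN; case: ifP => //; lia.
- move=> z; exists N => n hn; rewrite /uN /fullN (_ : minn n N = N) //; lia.
Qed.

Lemma InvT_full N : InvT N (fullN N).
Proof.
split.
- move=> z t; rewrite /fullN; case: ifP => // h; case => <-; split => //; lia.
- by rewrite /fullN; ifs.
- by move=> x y z; rewrite /indom /fullN; ifs.
Qed.

Lemma full_noStep N : ~ exists b, step (TN N) (fullN N) b.
Proof.
move=> [b st]; have [h1 _ _] := InvT_step (InvT_full N) st.
case: st => [p [t [hp [_ [hb _]]]]].
have := h1 p t; rewrite hb eqxx => /(_ erefl) [? ? _].
by move: hp; rewrite /fullN; case: ifP => //; lia.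
Qed.

Lemma terminal_eq N b : terminal (TN N) b -> b =1 fullN N.
Proof.
move=> [pb nst]; have [h1 h0 hI] := prodT_inv pb.
move=> z; case ez: (b z) => [t|].
  case: (h1 _ _ ez) => ? ? ->; rewrite /fullN; ifs.
rewrite /fullN; case: ifP => // hz; exfalso.
have ex : exists k, b (k%:Z) == None by exists `|z|%N; rewrite (_ : (`|z|%N)%:Z = z) ?ez //; lia.
case: (ex_minnP ex) => k /eqP hk hmin.
have k0 : (0 < k)%N by case: k hk {hmin} => //; rewrite h0.
have kz : (k <= `|z|)%N by apply: hmin; rewrite (_ : (`|z|%N)%:Z = z) ?ez //; lia.
have dom : forall y : int, indom b y = (Posz 0 <= y) && (y < k%:Z).
  move=> y; apply/idP/idP.
  - rewrite /indom; case ey: (b y) => [t|]; last by rewrite eqxx.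
    move=> _.
    case: (h1 _ _ ey) => y0 _ _.
    rewrite y0 /=; rewrite ltNge; apply/negP => ky.
    have : indom b k%:Z by apply: (hI 0 k%:Z y) => //; rewrite /indom ?h0 ?ey.
    by rewrite /indom hk.
  - move/andP => [y0 yk]; rewrite /indom; apply/negP => /eqP ey.
    have := hmin `|y|%N; rewrite (_ : (`|y|%N)%:Z = y) ?ey ?eqxx; last lia.
    move=> /(_ isT); lia.
apply: nst; exists (fun y : int => if y == k%:Z then Some (tk N k) else b y).
have Hb : forall (y : int) t, (if y == k%:Z then Some (tk N k) else b y) = Some t ->
    [/\ Posz 0 <= y, y <= k%:Z & t = tk N `|y|%N].
  move=> y t; case: (y =P k%:Z) => [->|ny].
    by case => <-; split => //; rewrite lexx.
  move=> ey; case: (h1 _ _ ey) => ? ? ->; have := dom y; rewrite /indom ey /= => d.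
  split => //; lia.
have dom' : forall y : int, indom (fun y => if y == k%:Z then Some (tk N k) else b y) y = (Posz 0 <= y) && (y <= k%:Z).
  move=> y; rewrite /indom; case: (y =P k%:Z) => [->|ny]; first by rewrite lexx andbT.
  rewrite -/(indom b y) dom; lia.
exists k%:Z, (tk N k); split => //; split; first by apply: tk_in; lia.
split => //; split; [split; [|split]|split].
- by exists k%:Z; rewrite /indom eqxx.
- move=> x y w hxy hyw; rewrite !dom'; lia.
- move=> y t /Hb [? ? ->]; apply: tk_in; lia.
- move=> y t1 t2 /Hb [? ? ->] /Hb [? ? ->]; rewrite (_ : absz (y + 1) = (absz y).+1); last lia.
  by rewrite bond_chain //; lia.
- apply: lin_ok_right; first by move=> y; rewrite dom; lia.
  by rewrite dom; lia.
Qed.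

Lemma directed_TN N : directed (TN N).
Proof.
exists (fullN N); split; first by split; [apply: full_prod|apply: full_noStep].
exact: terminal_eq.
Qed.


Lemma blk_over (U : seq tile) m e x : (forall z t, e z = Some t -> t \in U) ->
  block_over U m (blk m e x).
Proof.
move=> hU; split; first by rewrite size_map size_iota.
move=> i t; case: (ltnP i m) => hi.
  by rewrite (nth_map 0%N) ?size_iota // nth_iota // add0n => /hU.
by rewrite nth_default // size_map size_iota.
Qed.

Lemma empty_unmapped U R e y : valid_repr U R -> (forall z t, e z = Some t -> t \in U) ->
  Rstar R e y = None -> Rlook R.2 (nseq R.1 None) = None.
Proof.
move=> vr hU hy; case E: (Rlook R.2 (nseq R.1 None)) => [t|] //.
have := vr (nseq R.1 None) (blk R.1 e y).
rewrite /Rstar in hy; rewrite hy E => H; symmetry; apply: H => //.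
- split; first by rewrite size_nseq.
  by move=> i t'; rewrite nth_nseq; case: ifP.
- exact: blk_over.
- split; first by rewrite size_nseq size_map size_iota.
  by move=> i t'; rewrite nth_nseq; case: ifP.
Qed.

Lemma mapped_nonempty R e x : Rlook R.2 (nseq R.1 None) = None ->
  Rstar R e x <> None -> nonempty_block R.1 e x.
Proof.
move=> E; rewrite /Rstar; case: (boolP (has (fun i : nat => indom e (R.1%:Z * x + i%:Z)) (iota 0 R.1))).
  by move=> /hasP [i]; rewrite mem_iota add0n => /andP [_ hi] hin _; exists i.
move=> hn; suff -> : blk R.1 e x = nseq R.1 None by rewrite E.
rewrite /blk; set s := map _ _.
have -> : R.1 = size s by rewrite size_map size_iota.
apply/all_pred1P; rewrite all_map; apply/allP => i hi /=.
rewrite -[_ == None]negbK; apply/negP => h.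
by move/hasP: hn; apply; exists i.
Qed.

Lemma far_block R e lo hi x y : maps_cleanly R e ->
  (forall x, indom (Rstar R e) x -> lo <= x <= hi) ->
  nonempty_block R.1 e x -> nonempty_block R.1 e y -> x <> y -> lo - 1 <= x <= hi + 1.
Proof.
move=> [h|h] hb hx hy nxy; last by case: nxy; apply: h.
case: (h _ hx) => u [u1 [u2 /hb]]; lia.
Qed.

Definition rw (lo hi : int) (e : asm) : asm :=
  fun z => if (lo <= z) && (z <= hi) then e z else None.

Lemma step_ext Sy a a' b : a =1 a' -> step Sy a b -> step Sy a' b.
Proof.
move=> e [p [t [hp [ht [hb [hA [hS [q [hq1 hq2]]]]]]]]].
exists p, t; split; first by rewrite -e.
split => //; split; first by move=> z; rewrite hb e.
split => //; split => //; exists q; split.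
  case: hq1 => h; [left|right] => z; rewrite /indom -e; exact: h.
by move=> z h1 h2; rewrite /indom -e; apply: hq2.
Qed.

Lemma step_rw Sy lo hi a b : step Sy a b ->
  step Sy (rw lo hi a) (rw lo hi b) \/ rw lo hi b =1 rw lo hi a.
Proof.
move=> [p [t [hp [ht [hb [[hne [hI hT]] [hS [q [hq1 hq2]]]]]]]]].
case hin: ((lo <= p) && (p <= hi)); last first.
  right => z; rewrite /rw hb; case: (z =P p) => [ez|//].
  by rewrite ez hin.
left; exists p, t; split; first by rewrite /rw hin.
split => //; split.
  move=> z; rewrite /rw hb; case: (z =P p) => [->|_]; first by rewrite hin.
  by [].
split; [split; [|split]|split].
- by exists p; rewrite /indom /rw hin hb eqxx.
- move=> x y z hxy hyz; rewrite /indom /rw.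
  case: ifP => hx; last by rewrite eqxx.
  case: ifP => hz; last by rewrite eqxx.
  move=> bx bz; have -> : (lo <= y) && (y <= hi) by lia.
  exact: (hI x y z).
- by move=> z t'; rewrite /rw; case: ifP => // _; apply: hT.
- by move=> z t1 t2; rewrite /rw; case: ifP => // _ h1; case: ifP => // _ h2; apply: (hS z).
- exists q; split.
    case: hq1 => h; [left|right] => z; rewrite /indom /rw; case: ifP => _;
      [exact: h| by rewrite eqxx| exact: h| by rewrite eqxx].
  move=> z h1 h2; rewrite /indom /rw; case: ifP => _; [exact: hq2|by rewrite eqxx].
Qed.

Lemma step_extend Sy c lo h t : intv c -> (forall z t, c z = Some t -> t \in tiles_of Sy) ->
  stable (temp_of Sy) c -> lo <= h + 1 -> c (h + 1) = Some t ->
  step Sy (rw lo h c) (rw lo (h + 1) c).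
Proof.
move=> hI hT hS hlo hc; exists (h + 1), t; split.
  by rewrite /rw; case: ifP => //; lia.
split; first by apply: (hT (h+1)).
split.
  move=> z; rewrite /rw; case: (z =P h + 1) => [->|nz].
    by rewrite hc; case: ifP => //; lia.
  case: ifP => h1; case: ifP => h2 //; lia.
split; [split; [|split]|split].
- by exists (h+1); rewrite /indom /rw hc; case: ifP => //; lia.
- move=> x y z hxy hyz; rewrite /indom /rw.
  case: ifP => hx; last by rewrite eqxx.
  case: ifP => hz; last by rewrite eqxx.
  move=> bx bz; have -> : (lo <= y) && (y <= h + 1) by lia.
  exact: (hI x y z).
- by move=> z t'; rewrite /rw; case: ifP => // _; apply: hT.
- by move=> z t1 t2; rewrite /rw; case: ifP => // _ h1; case: ifP => // _ h2; apply: (hS z).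
- apply: lin_ok_right.
    move=> z; rewrite /indom /rw; case: ifP => hz; last by rewrite eqxx.
    move=> _; lia.
  by rewrite /indom /rw; case: ifP => [hh|]; [lia|rewrite eqxx].
Qed.

Lemma conv_range (s : nat -> asm) b (lo : int) (k : nat) :
  (forall z, exists N, forall n, (N <= n)%N -> s n z = b z) ->
  exists N, forall n, (N <= n)%N -> forall z, lo <= z -> z < lo + k%:Z -> s n z = b z.
Proof.
move=> hc; elim: k => [|k [N IH]].
  by exists 0%N => n _ z h1 h2; exfalso; lia.
case: (hc (lo + k%:Z)) => N' h'.
exists (maxn N N') => n hn z h1 h2.
case: (z =P lo + k%:Z) => [->|nz]; first by apply: h'; lia.
apply: IH; lia.
Qed.


Definition pumped (lo p : int) (d : nat) (a : asm) : asm :=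
  fun z => if z < lo then None else if z <= p then a z
           else a (p + ((absz (z - p)%R) %% d)%N%:Z).

Definition PumpH (Sy : system) (a : asm) (lo p : int) (d : nat) : Prop :=
  [/\ intv a, (forall z t, a z = Some t -> t \in tiles_of Sy), stable (temp_of Sy) a,
      (0 < d)%N & [/\ lo <= p, indom a p, a p = a (p + d%:Z) & indom a (p + d%:Z)]].

Lemma mid_in (Sy : system) (a : asm) (lo p : int) (d : nat) (HP : PumpH Sy a lo p d) (r : nat) : (r <= d)%N -> indom a (p + r%:Z).
Proof. have [hI hT hS d0 [lop hp hpd hpd']] := HP. by move=> hr; apply: (hI p (p + r%:Z) (p + d%:Z)) => //; lia. Qed.

Lemma c_tiles (Sy : system) (a : asm) (lo p : int) (d : nat) (HP : PumpH Sy a lo p d) z t : (pumped lo p d a) z = Some t -> t \in tiles_of Sy.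
Proof. have [hI hT hS d0 [lop hp hpd hpd']] := HP. by rewrite /pumped; case: ifP => // _; case: ifP => _ /hT. Qed.

Lemma c_right (Sy : system) (a : asm) (lo p : int) (d : nat) (HP : PumpH Sy a lo p d) z : p < z -> indom (pumped lo p d a) z.
Proof. have [hI hT hS d0 [lop hp hpd hpd']] := HP.
move=> hz; rewrite /indom /pumped; case: ifP => [h|_]; first lia.
case: ifP => [h|_]; first lia.
by apply: (mid_in HP); apply: ltnW; apply: ltn_pmod.
Qed.

Lemma c_left (Sy : system) (a : asm) (lo p : int) (d : nat) (HP : PumpH Sy a lo p d) z : lo <= z -> z <= p -> (pumped lo p d a) z = a z.
Proof. have [hI hT hS d0 [lop hp hpd hpd']] := HP. by move=> h1 h2; rewrite /pumped; case: ifP => h; [lia|rewrite h2]. Qed.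

Lemma c_shift (Sy : system) (a : asm) (lo p : int) (d : nat) (HP : PumpH Sy a lo p d) (k : nat) : (pumped lo p d a) (p + k%:Z) = a (p + (k %% d)%N%:Z).
Proof. have [hI hT hS d0 [lop hp hpd hpd']] := HP.
rewrite /pumped; case: ifP => h; first lia.
case: ifP => h2; last by rewrite (_ : absz ((p + k%:Z - p)%R) = k) //; lia.
have k0 : k = 0%N by lia.
by rewrite k0 mod0n.
Qed.

Lemma c_intv (Sy : system) (a : asm) (lo p : int) (d : nat) (HP : PumpH Sy a lo p d) : intv (pumped lo p d a).
Proof. have [hI hT hS d0 [lop hp hpd hpd']] := HP.
move=> x y z hxy hyz hx hz.
case: (ltrP p y) => hy; first exact: (c_right HP).
have hxlo : lo <= x by move: hx; rewrite /indom /pumped; case: ifP => [_|h]; [by rewrite eqxx| move=> _; lia].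
rewrite /indom (c_left HP) //; last lia.
have ax : indom a x by move: hx; rewrite /indom (c_left HP) //; lia.
case: (ltrP p z) => hz'.
  by apply: (hI x y p).
by apply: (hI x y z) => //; move: hz; rewrite /indom (c_left HP) //; lia.
Qed.

Lemma c_stable (Sy : system) (a : asm) (lo p : int) (d : nat) (HP : PumpH Sy a lo p d) : stable (temp_of Sy) (pumped lo p d a).
Proof. have [hI hT hS d0 [lop hp hpd hpd']] := HP.
move=> z t1 t2 h1 h2.
have zlo : lo <= z by move: h1; rewrite /pumped; case: ifP => // h _; lia.
case: (ltrP z p) => hz.
  rewrite (c_left HP) in h1; [|lia|lia]; rewrite (c_left HP) in h2; [|lia|lia].
  exact: (hS z).
have [k ek] : exists k : nat, z = p + k%:Z by exists (absz (z - p)); lia.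
have E : a (p + (k.+1 %% d)%N%:Z) = a (p + (k %% d)%N%:Z + 1).
  have lt := ltn_pmod k d0.
  have em : (((k %% d).+1) %% d = k.+1 %% d)%N by rewrite -addn1 modnDml addn1.
  case: (ltnP (k %% d).+1 d) => hl.
    rewrite -em modn_small //; congr a; lia.
  have ed : (k %% d).+1 = d by lia.
  rewrite -em ed modnn addr0 hpd; congr a; lia.
move: h1 h2; rewrite ek (c_shift HP) (_ : p + k%:Z + 1 = p + (k.+1)%:Z); last lia.
rewrite (c_shift HP) E => h1 h2; exact: (hS _ _ _ h1 h2).
Qed.

Lemma c_ext (Sy : system) (a : asm) (lo p : int) (d : nat) (HP : PumpH Sy a lo p d) h : p <= h -> step Sy (rw lo h (pumped lo p d a)) (rw lo (h + 1) (pumped lo p d a)).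
Proof. have [hI hT hS d0 [lop hp hpd hpd']] := HP.
move=> hh; have : indom (pumped lo p d a) (h + 1) by apply: (c_right HP); lia.
rewrite /indom; case E: ((pumped lo p d a) (h + 1)) => [t|] // _.
apply: (step_extend (c_intv HP) (c_tiles HP) (c_stable HP) _ E); lia.
Qed.

Lemma pump_prod (Sy : system) (a : asm) (lo p : int) (d : nat) (HP : PumpH Sy a lo p d) (s : nat -> asm) :
  s 0%N =1 seed_asm (seed_of Sy) ->
  (forall i, step Sy (s i) (s i.+1) \/ s i.+1 =1 s i) ->
  (forall z, exists N, forall n, (N <= n)%N -> s n z = a z) ->
  (forall z, indom (seed_asm (seed_of Sy)) z -> lo <= z /\ z <= p) ->
  producible Sy (pumped lo p d a).
Proof. have [hI hT hS d0 [lop hp hpd hpd']] := HP.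
move=> s0 hs hc hseed.
case: (conv_range lo (absz (p - lo)%R).+1 hc) => N0 hN0.
have agree : rw lo p (s N0) =1 rw lo p (pumped lo p d a).
  move=> z; rewrite /rw; case: ifP => // /andP [h1 h2]; rewrite hN0 //; last lia.
  by rewrite (c_left HP).
pose u i := if (i <= N0)%N then rw lo p (s i) else rw lo (p + (i - N0)%:Z) (pumped lo p d a).
exists u; split; [|split].
- move=> z; rewrite /u /= /rw s0; case: ifP => // h.
  case E: (seed_asm (seed_of Sy) z) => [t|] //.
  have := hseed z; rewrite /indom E => /(_ isT); lia.
- move=> i; rewrite /u; case: (ltnP i N0) => hi.
  + rewrite (ltnW hi); case: (hs i) => [st|eq]; first exact: step_rw.
    by right => z; rewrite /rw eq.
  + case: (i =P N0) => [ei|ne].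
    * subst i; case: ifP => [_|hh]; last by rewrite leqnn in hh.
      left.
      rewrite (_ : p + (N0.+1 - N0)%N%:Z = p + 1); last lia.
      apply: (step_ext (fun z => esym (agree z))); apply: (c_ext HP); lia.
    * have h1 : (i <= N0)%N = false by apply/negbTE; rewrite -ltnNge; lia.
      have h2 : (i.+1 <= N0)%N = false by apply/negbTE; rewrite -ltnNge; lia.
      case: ifP => [hh|_]; first by rewrite h1 in hh.
      try (case: ifP => [hh|_]; first by rewrite h2 in hh).
      left.
      rewrite (_ : p + (i.+1 - N0)%N%:Z = p + (i - N0)%N%:Z + 1); last lia.
      apply: (c_ext HP); lia.
- move=> z; exists (N0.+1 + absz (z - p)%R)%N => n hn; rewrite /u; case: ifP => h; first lia.
  rewrite /rw; case: ifP => // hz.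
  rewrite /pumped; case: ifP => //; lia.
Qed.


Theorem mainTheorem9 :
  ~ exists (U : seq tile) (tau' : nat) (R : system -> rep_fun) (S : system -> seedT),
      computable_map R /\ computable_map S /\
      forall T : system, valid_system T -> directed T ->
        valid_system (U, S T, tau') /\ simulates (U, S T, tau') T (R T).
Proof.
move=> [U [tau' [R [S [_ [_ H]]]]]].
pose K := size U. pose N := (K + 3)%N.
have [vS sim] := H (TN N) (valid_TN N) (directed_TN N).
move: sim => [m0 [vrep [_ [i1 [i2 [_ [i4 [clean _]]]]]]]].
set RT := R (TN N) in m0 vrep i1 i2 i4 clean.
set m := RT.1 in m0.
have tfull : terminal (TN N) (fullN N) := conj (full_prod N) (@full_noStep N).
case: (i4 _ tfull) => a' [[pa' _] ea'].
have [_ ia' ua' sa'] := prod_inv vS pa'.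
have E0 : Rlook RT.2 (nseq RT.1 None) = None.
  apply: (empty_unmapped (y := (N.+1)%:Z) vrep ua').
  rewrite ea' /fullN; ifs.
have ne : forall e x, Rstar RT e x <> None -> nonempty_block m e x.
  by move=> e x; apply: mapped_nonempty.
have pT0 : producible (TN N) (seed_asm (seed_of (TN N))).
  by exists (fun _ => seed_asm (seed_of (TN N))); split => //; split => [i|z]; [right|exists 0%N].
case: (i2 _ pT0) => a'' [pa'' ea''].
have [sub'' ia'' _ _] := prod_inv vS pa''.
have bnd'' : forall x, indom (Rstar RT a'') x -> (Posz 0 <= x) && (x <= Posz 0).
  move=> x; rewrite /indom ea'' seedTN; case: (x =P 0) => [->|] //; by rewrite eqxx.
have [i0 [hi0 hin0]] : nonempty_block m a'' 0 by apply: ne; rewrite ea'' seedTN eqxx.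
have cl'' := clean _ pa''.
have seedb : forall z, indom (seed_asm (seed_of (U, S (TN N), tau'))) z ->
    - (m%:Z) <= z /\ z <= m%:Z * 2.
  move=> z hz.
  have hz'' : indom a'' z.
    move: hz; rewrite /indom; case E: (seed_asm _ z) => [t|] // _.
    by rewrite (sub'' _ _ E).
  split.
  - rewrite leNgt; apply/negP => hlt.
    have hb : nonempty_block m a'' (-2).
      exists (m.-1)%N; split; first lia.
      apply: (ia'' z _ (m%:Z * 0 + i0%:Z)) => //; lia.
    have := far_block cl'' bnd'' hb (y := 0) (ex_intro _ i0 (conj hi0 hin0)) (ltac:(by [])).
    done.

  - rewrite leNgt; apply/negP => hlt.
    have hb : nonempty_block m a'' 2.
      exists 0%N; split; first lia.
      apply: (ia'' (m%:Z * 0 + i0%:Z) _ z) => //; lia.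
    have := far_block cl'' bnd'' hb (y := 0) (ex_intro _ i0 (conj hi0 hin0)) (ltac:(by [])).
    done.

have [j0 [hj0 hinj0]] : nonempty_block m a' 0 by apply: ne; rewrite ea' /fullN; ifs.
have [jN [hjN hinjN]] : nonempty_block m a' N%:Z by apply: ne; rewrite ea' /fullN; ifs.
have mK : (K <= m * K)%N by apply: leq_pmull.
have ina : forall i : nat, (i <= K)%N -> indom a' (m%:Z * 2 + i%:Z).
  move=> i hi; apply: (ia' (m%:Z * 0 + j0%:Z) _ (m%:Z * N%:Z + jN%:Z)) => //; rewrite /N; lia.
pose L := [seq a' (m%:Z * 2 + i%:Z) | i <- iota 0 K.+1].
have nu : ~~ uniq L.
  apply/negP => u.
  have := uniq_leq_size u (s2 := map Some U).
  rewrite !size_map size_iota /K => h.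
  suff : (K.+1 <= size U)%N by rewrite /K ltnn.
  apply: h => x /mapP [i]; rewrite mem_iota => /andP [_ hi] ->.
  have := ina i ltac:(lia); rewrite /indom; case E: (a' _) => [t|] // _.
  by apply/mapP; exists t => //; apply: (ua' _ _ E).
case/(uniqPn None): nu => i [j] [hij hj].
rewrite size_map size_iota in hj.
have hi' : (i < K.+1)%N by lia.
rewrite !(nth_map 0%N) ?size_iota // ?nth_iota //.
rewrite !add0n => eqij.
case: (pa') => s [s0 [hs hc]].
pose p := m%:Z * 2 + i%:Z. pose d := (j - i)%N.
have d0 : (0 < d)%N by rewrite /d; lia.
have lop : - (m%:Z) <= p by rewrite /p; lia.
have hp : indom a' p by apply: ina; lia.
have epd : p + d%:Z = m%:Z * 2 + j%:Z by rewrite /p /d; lia.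
have hpd : a' p = a' (p + d%:Z) by rewrite epd.
have hpd' : indom a' (p + d%:Z) by rewrite epd; apply: ina; lia.
have sb : forall z, indom (seed_asm (seed_of (U, S (TN N), tau'))) z -> - (m%:Z) <= z /\ z <= p.
  by move=> z /seedb [h1 h2]; split => //; rewrite /p; lia.
have HP : PumpH (U, S (TN N), tau') a' (- (m%:Z)) p d by [].
have pc := pump_prod HP s0 hs hc sb.
have [hTc _ _] := prodT_inv (i1 _ pc).
have bndc : forall x, indom (Rstar RT (pumped (- (m%:Z)) p d a')) x -> (Posz 0 <= x) && (x <= N%:Z).
  move=> x; rewrite /indom; case E: (Rstar _ _ x) => [t|] // _.
  by case: (hTc _ _ E) => h1 h2 _; rewrite h1 h2.
have hb1 : nonempty_block m (pumped (- (m%:Z)) p d a') (N%:Z + 3).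
  exists 0%N; split => //; apply: (c_right HP); rewrite /p /N; lia.
have hb2 : nonempty_block m (pumped (- (m%:Z)) p d a') (N%:Z + 4).
  exists 0%N; split => //; apply: (c_right HP); rewrite /p /N; lia.
have := far_block (clean _ pc) bndc hb1 hb2 ltac:(lia).
lia.
Qed.
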